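(* Let $v\in\Sigma^*$, let $u$ be a $v$-minimal word and $i\in\mathrm{supp}(u)$. Then: (1) every element $g\in\mathcal{I}_i$ is $u$-representable (i.e. some word $u$-represents $g$); (2) if $w$ is a word that $u$-represents some $g\in\mathcal{I}_i\setminus\{0_i\}$, then $\mathrm{rk}(w)=\mathrm{Rnk}(\mathcal{I}_i)$; (3) if $x\in\Sigma^*$ satisfies $\theta_i(x)=0_i$ for some $i\in\mathrm{supp}(u)$, then $\theta_j(x)=0_j$ for all $j\in\mathrm{supp}(u)$.
   Context: Let $\mathcal{A}=\langle Q,\Sigma,\delta\rangle$ be a synchronizing automaton with $n$ states $q_1,\dots,q_n$; write $q\cdot u$ for the action of $u\in\Sigma^*$ and $\mathrm{rk}(u)=|Q\cdot u|$. Each word acts linearly on $\mathbb{C}Q$ by $q\mapsto q\cdot u$, preserving $w^\perp=\{x:\langle x,q_1+\dots+q_n\rangle=0\}$; let $\rho:\Sigma^*\to\mathbb{M}_{n-1}(\mathbb{C})$ be the induced representation, $\mathcal{R}$ the $\mathbb{C}$-algebra generated by $\rho(\Sigma^* )$, $\mathrm{Rad}(\mathcal{A})=\rho^{-1}(\mathrm{Rad}(\mathcal{R}))$. Write $\mathcal{R}/\mathrm{Rad}(\mathcal{R})\cong\prod_{i=1}^k\mathbb{M}_{n_i}(\mathbb{C})$ and let $\theta_i:\Sigma^*\to\mathbb{M}_{n_i}(\mathbb{C})$ be $\rho$ followed by the quotient map and the $i$-th projection; $0_i$ is the zero matrix. The monoid $\theta_i(\Sigma^* )$ has a unique $0$-minimal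 ideal $\mathcal{I}_i$; for $g\in\mathcal{I}_i\setminus\{0_i\}$ let $\mathrm{Rnk}_i(g)=\min\{\mathrm{rk}(u):\theta_i(u)=g\}$ and $\mathrm{Rnk}(\mathcal{I}_i)=\min\{\mathrm{Rnk}_i(g):g\in\mathcal{I}_i\setminus\{0_i\}\}$. The support of a word $z$ is $\mathrm{supp}(z)=\{i:\theta_i(z)\neq0_i\}$. For $v\in\Sigma^*$, a word $u\in\Sigma^*v\Sigma^*$ is $v$-minimal if $\mathrm{supp}(u)\neq\emptyset$ and there is no $z\in\Sigma^*v\Sigma^*$ with $\emptyset\neq\mathrm{supp}(z)\subsetneq\mathrm{supp}(u)$. For such $u$, $i\in\mathrm{supp}(u)$ and $g\in\mathcal{I}_i$, a word $w$ $u$-represents $g$ if $w\in\Sigma^*u\Sigma^*$, $\theta_i(w)=g$, and either $g=0_i$ or $\mathrm{rk}(w)$ is minimum among all words $w'\in\Sigma^*u\Sigma^*$ with $\theta_i(w')=g$. *)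

(* Defs.v *)
From mathcomp Require Import all_boot all_order all_algebra.
From mathcomp Require Import reals complex.
Set Implicit Arguments. Unset Strict Implicit. Unset Printing Implicit Defensive.
Import GRing.Theory Num.Theory.
Local Open Scope ring_scope.

(* States: Q = 'I_n.+1 (the paper's n is our n.+1); letters: Sigma : finType;
   transition function delta a q = q . a.  Words are seq Sigma. *)

Section Automaton.
Variables (Sigma : finType) (n : nat) (delta : Sigma -> 'I_n.+1 -> 'I_n.+1).

Definition act (q : 'I_n.+1) (u : seq Sigma) : 'I_n.+1 :=
  foldl (fun p a => delta a p) q u.

Definition rk (u : seq Sigma) : nat := #|[set act q u | q : 'I_n.+1]|.

Definition synchronizing : Prop := exists u, rk u = 1%N.

(* The states q_1..q_n (paper) as 'I_n.+1; the last state is ord_max. *)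
Definition st (j : 'I_n) : 'I_n.+1 := widen_ord (leqnSn n) j.

(* rho(u) : matrix (acting on row vectors) of the map x |-> x . u restricted to
   w^perp = {x | sum_q x_q = 0}, in the basis b_j = q_j - q_{last} (j < n).
   Indeed b_j . u = q_{j.u} - q_{last.u}, whose b_l-coordinate is
   [j.u = l] - [last.u = l]. *)
Definition rho (C : nzRingType) (u : seq Sigma) : 'M[C]_n :=
  \matrix_(j, l) (((act (st j) u == st l)%:R : C) - (act ord_max u == st l)%:R).

End Automaton.

Section Algebra.
Variables (C : fieldType) (n : nat).

Definition gen_alg (S : 'M[C]_n -> Prop) (A : 'M[C]_n) : Prop :=
  exists s : seq (C * seq 'M[C]_n),
    (forall p, p \in s -> forall M, M \in p.2 -> S M) /\
    A = \sum_(p <- s) p.1 *: \big[mulmx/1%:M]_(M <- p.2) M.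

Definition rad (Alg : 'M[C]_n -> Prop) (a : 'M[C]_n) : Prop :=
  Alg a /\ forall b, Alg b -> exists c, Alg c /\
     c *m (1%:M - b *m a) = 1%:M /\ (1%:M - b *m a) *m c = 1%:M.

(* phi = (phi_i)_{i<k} induces an isomorphism of C-algebras
   Alg / rad Alg ~= prod_{i<k} M_{d i}(C):
   each phi_i is a unital algebra morphism on Alg, the joint map is onto the
   product, and its kernel (on Alg) is exactly rad Alg. *)
Definition wedderburn_decomp (Alg : 'M[C]_n -> Prop) (k : nat) (d : 'I_k -> nat)
  (phi : forall i : 'I_k, 'M[C]_n -> 'M[C]_(d i)) : Prop :=
  [/\ (forall i, 0 < d i)%N,
      (forall i c a b, Alg a -> Alg b -> phi i (c *: a + b) = c *: phi i a + phi i b),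
      (forall i a b, Alg a -> Alg b -> phi i (a *m b) = phi i a *m phi i b)
        /\ (forall i, phi i 1%:M = 1%:M),
      (forall g : forall i, 'M[C]_(d i), exists a, Alg a /\ forall i, phi i a = g i)
    & (forall a, Alg a -> ((forall i, phi i a = 0) <-> rad Alg a))].

End Algebra.

Section Monoid.
Variables (Sigma : finType) (C : fieldType) (m : nat) (T : seq Sigma -> 'M[C]_m).

Definition is_ideal (I : 'M[C]_m -> Prop) : Prop :=
  [/\ exists g, I g,
      (forall g, I g -> exists u, T u = g)
    & (forall x y g, I g -> I (T x *m g *m T y))].

Definition zero_minimal_ideal (I : 'M[C]_m -> Prop) : Prop :=
  [/\ is_ideal I,
      exists g, I g /\ g != 0
    & forall J, is_ideal J -> (forall g, J g -> I g) ->
        (forall g, J g <-> g = 0) \/ (forall g, J g <-> I g)].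

End Monoid.

Definition is_min (P : nat -> Prop) (r : nat) : Prop :=
  P r /\ forall r', P r' -> (r <= r')%N.

Section Rank.
Variables (Sigma : finType) (n : nat) (delta : Sigma -> 'I_n.+1 -> 'I_n.+1).
Variables (C : fieldType) (m : nat) (T : seq Sigma -> 'M[C]_m).

Definition Rnk_elt (g : 'M[C]_m) (r : nat) : Prop :=
  is_min (fun r' => exists u, T u = g /\ rk delta u = r') r.

Definition Rnk_ideal (I : 'M[C]_m -> Prop) (r : nat) : Prop :=
  is_min (fun r' => exists g, [/\ I g, g != 0 & Rnk_elt g r']) r.

End Rank.

Section Support.
Variables (Sigma : finType) (n : nat) (delta : Sigma -> 'I_n.+1 -> 'I_n.+1).
Variables (C : fieldType) (k : nat) (d : 'I_k -> nat).
Variable theta : forall i : 'I_k, seq Sigma -> 'M[C]_(d i).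

Definition supp (z : seq Sigma) : {set 'I_k} := [set i | theta i z != 0].

Definition in_two_sided (v u : seq Sigma) : Prop := exists x y, u = x ++ v ++ y.

Definition v_minimal (v u : seq Sigma) : Prop :=
  [/\ in_two_sided v u, supp u != set0
    & ~ exists z, [/\ in_two_sided v z, supp z != set0 & supp z \proper supp u]].

Definition u_represents (u : seq Sigma) (i : 'I_k) (g : 'M[C]_(d i)) (w : seq Sigma) : Prop :=
  [/\ in_two_sided u w, theta i w = g
    & g = 0 \/ forall w', in_two_sided u w' -> theta i w' = g -> (rk delta w <= rk delta w')%N].

End Support.

(* Main.v *)
Require Import Defs.
From mathcomp Require Import all_boot all_order all_algebra.
From mathcomp Require Import reals complex.
From Stdlib Require Import Classical.
Set Implicit Arguments. Unset Strict Implicit. Unset Printing Implicit Defensive.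
Import GRing.Theory Num.Theory.
Local Open Scope ring_scope.

Lemma act_cat (Sigma : finType) n (delta : Sigma -> 'I_n.+1 -> 'I_n.+1) q u v :
  act delta q (u ++ v) = act delta (act delta q u) v.
Proof. by rewrite /act foldl_cat. Qed.

Lemma rho_cat (Sigma : finType) n (delta : Sigma -> 'I_n.+1 -> 'I_n.+1)
  (C : nzRingType) u v :
  rho delta C (u ++ v) = rho delta C u *m rho delta C v.
Proof.
apply/matrixP => j l; rewrite !mxE.
set F := fun s : 'I_n.+1 => ((act delta s v == st l)%:R : C) - (act delta ord_max v == st l)%:R.
have F0 : F ord_max = 0 by rewrite /F subrr.
have key : forall p, \sum_(m < n) ((p == st m)%:R : C) * F (st m) = F p.
  move=> p.
  transitivity (\sum_(s < n.+1) ((p == s)%:R : C) * F s).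
    by rewrite big_ord_recr /= F0 mulr0 addr0.
  rewrite (bigD1 p) //= eqxx mul1r big1 ?addr0 // => s /negPf.
  by rewrite eq_sym => ->; rewrite mul0r.
under eq_bigr => m _ do rewrite !mxE mulrBl.
rewrite sumrB !key /F !act_cat.
rewrite opprB addrA subrK; done.
Qed.

Lemma rho_nil (Sigma : finType) n (delta : Sigma -> 'I_n.+1 -> 'I_n.+1)
  (C : nzRingType) : rho delta C [::] = 1%:M.
Proof.
apply/matrixP => j l; rewrite !mxE /act /=.
have -> : (st j == st l) = (j == l).
  by rewrite /st -val_eqE /= val_eqE.
have -> : (@ord_max n == st l) = false.
  by apply/negbTE; rewrite -val_eqE /= neq_ltn ltn_ord orbT.
by rewrite subr0.
Qed.

Lemma rho_reset (Sigma : finType) n (delta : Sigma -> 'I_n.+1 -> 'I_n.+1)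
  (C : nzRingType) r : rk delta r = 1%N -> rho delta C r = 0.
Proof.
move=> /eqP /cards1P [x Hx].
have E : forall q, act delta q r = x.
  move=> q; apply/set1P; rewrite -Hx; exact: imset_f.
by apply/matrixP => j l; rewrite !mxE !E subrr.
Qed.

Lemma rk_sub (Sigma : finType) n (delta : Sigma -> 'I_n.+1 -> 'I_n.+1) a b c :
  (rk delta (a ++ b ++ c) <= rk delta b)%N.
Proof.
rewrite /rk.
have -> : [set act delta q (a ++ b ++ c) | q : 'I_n.+1] =
  [set act delta p c | p in [set act delta q (a ++ b) | q : 'I_n.+1]].
  by rewrite -imset_comp; apply: eq_imset => q /=; rewrite catA act_cat.
apply: leq_trans (leq_imset_card _ _) _.
apply: subset_leq_card; apply/subsetP => p /imsetP [q _ ->].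
by rewrite act_cat; apply: imset_f.
Qed.

Lemma ex_min (P : nat -> Prop) : (exists N, P N) -> exists m, P m /\ forall k, P k -> (m <= k)%N.
Proof.
move=> [N]; elim/ltn_ind: N => N IH PN.
case: (classic (exists k, (k < N)%N /\ P k)) => [[k [kN Pk]]|H].
  exact: IH kN Pk.
exists N; split => // k Pk; rewrite leqNgt; apply/negP => kN.
by apply: H; exists k.
Qed.

Lemma nz_entry (F : fieldType) m p (A : 'M[F]_(m, p)) : A != 0 -> exists i j, A i j != 0.
Proof.
move=> nzA; apply: NNPP => H; move/negP: nzA; apply; apply/eqP/matrixP => i j.
rewrite mxE; apply/eqP; apply: negbNE; apply/negP => Hij.
by apply: H; exists i, j.
Qed.

Lemma mat_nz (F : fieldType) m (A B : 'M[F]_m) :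
  A != 0 -> B != 0 -> exists M, A *m M *m B != 0.
Proof.
move=> /nz_entry [i0 [j0 HA]] /nz_entry [i1 [j1 HB]].
exists (delta_mx j0 i1).
rewrite -(mul_delta_mx (0 : 'I_1)) mulmxA -colE -mulmxA -rowE.
apply/eqP => /matrixP /(_ i0 j1); rewrite !mxE big_ord1 !mxE.
by move/eqP; rewrite mulf_eq0 (negPf HA) (negPf HB).
Qed.

Lemma span_nz (Sigma : finType) (F : fieldType) m (T : seq Sigma -> 'M[F]_m)
  (Hspan : forall M, exists s : seq (F * seq Sigma), M = \sum_(p <- s) p.1 *: T p.2)
  (A B : 'M[F]_m) : A != 0 -> B != 0 -> exists z, A *m T z *m B != 0.
Proof.
move=> nA nB; have [M HM] := mat_nz nA nB.
apply: NNPP => H; move/negP: HM; apply; apply/eqP.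
have [s ->] := Hspan M.
rewrite mulmx_sumr mulmx_suml big1_seq // => p _.
rewrite -scalemxAr -scalemxAl.
have -> : A *m T p.2 *m B = 0.
  apply/eqP; apply: negbNE; apply/negP => Hp; by apply: H; exists p.2.
by rewrite scaler0.
Qed.

Lemma key_lemma (Sigma : finType) n (delta : Sigma -> 'I_n.+1 -> 'I_n.+1)
  (F : fieldType) m (T : seq Sigma -> 'M[F]_m)
  (Hcat : forall x y, T (x ++ y) = T x *m T y) (Hnil : T [::] = 1%:M)
  (Hspan : forall M, exists s : seq (F * seq Sigma), M = \sum_(p <- s) p.1 *: T p.2)
  (I : 'M[F]_m -> Prop) (HI : zero_minimal_ideal T I) u (Hu : T u != 0)
  y (Iy : I (T y)) (ny : T y != 0) g (Ig : I g) :
  exists w, [/\ in_two_sided u w, T w = g & (rk delta w <= rk delta y)%N].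
Proof.
case: HI => [[_ _ Icl] _ Imin].
have [z Hz] := span_nz Hspan ny Hu.
have nC : T (y ++ z ++ u) != 0 by rewrite !Hcat mulmxA.
have [z' Hz'] := span_nz Hspan nC ny.
set h := T (y ++ z ++ u ++ z' ++ y).
have nh : h != 0 by rewrite /h; rewrite !Hcat !mulmxA in Hz' *.
have Ih : I h.
  have := Icl (y ++ z ++ u ++ z') [::] (T y) Iy.
  by rewrite Hnil mulmx1 -Hcat /h -!catA.
pose J := fun M => exists x x', M = T x *m h *m T x'.
have Jid : is_ideal T J.
  split.
  - by exists h, [::], [::]; rewrite Hnil mul1mx mulmx1.
  - move=> M [x [x' ->]]; exists (x ++ (y ++ z ++ u ++ z' ++ y) ++ x').
    by rewrite /h !Hcat !mulmxA.
  - move=> a b M [x [x' ->]]; exists (a ++ x), (x' ++ b).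
    by rewrite !Hcat !mulmxA.
have JI : forall M, J M -> I M.
  move=> M [x [x' ->]]; exact: Icl.
case: (Imin J Jid JI) => HJ.
  have : J h by exists [::], [::]; rewrite Hnil mul1mx mulmx1.
  by move/HJ => /eqP; rewrite (negPf nh).
have [x [x' Eg]] := (proj2 (HJ g)) Ig.
exists (x ++ (y ++ z ++ u ++ z' ++ y) ++ x'); split.
- exists (x ++ y ++ z), (z' ++ y ++ x'); by rewrite -!catA.
- by rewrite Eg /h !Hcat !mulmxA.
- have := rk_sub delta x y (z ++ u ++ z' ++ y ++ x').
  by rewrite -!catA.
Qed.
Unset Implicit Arguments.

Theorem mainTheorem5 (R : realType) (Sigma : finType) (n : nat)
  (delta : Sigma -> 'I_n.+1 -> 'I_n.+1)
  (k : nat) (d : 'I_k -> nat)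
  (phi : forall l : 'I_k, 'M[R[i]]_n -> 'M[R[i]]_(d l)) :
  synchronizing delta ->
  wedderburn_decomp (gen_alg (fun M => exists u, M = rho delta R[i] u)) phi ->
  let theta := fun (l : 'I_k) (u : seq Sigma) => phi l (rho delta R[i] u) in
  forall (v u : seq Sigma) (l : 'I_k),
    v_minimal theta v u -> l \in supp theta u ->
    (forall I : 'M[R[i]]_(d l) -> Prop, zero_minimal_ideal (theta l) I ->
       (forall g, I g -> exists w, u_represents delta theta u g w) /\
       (forall g w, I g -> g != 0 -> u_represents delta theta u g w ->
          Rnk_ideal delta (theta l) I (rk delta w))) /\
    (forall x : seq Sigma, (exists l', l' \in supp theta u /\ theta l' x = 0) ->
       forall j, j \in supp theta u -> theta j x = 0).
Proof.
move=> [r Hr] [dpos Hlin [Hmul Hone] Hsurj Hrad] theta v u l Hvmin Hl.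
set Alg := gen_alg (fun M => exists u, M = rho delta R[i] u).
have AlgRho : forall w, Alg (rho delta R[i] w).
  move=> w; exists [:: (1, [:: rho delta R[i] w])]; split.
    by move=> p; rewrite inE => /eqP -> M; rewrite inE => /eqP ->; exists w.
  by rewrite big_cons big_nil big_cons big_nil mulmx1 scale1r addr0.
have Alg0 : Alg 0 by exists [::]; split => //; rewrite big_nil.
have Tcat : forall j x y, theta j (x ++ y) = theta j x *m theta j y.
  by move=> j x y; rewrite /theta rho_cat (Hmul _ _ _ (AlgRho x) (AlgRho y)).
have Tnil : forall j, theta j [::] = 1%:M by move=> j; rewrite /theta rho_nil Hone.
have phi0 : forall j, phi j 0 = 0.
  move=> j; have := Hlin j 1 0 0 Alg0 Alg0; rewrite scaler0 addr0 scale1r => H.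
  by apply: (@addrI _ (phi j 0)); rewrite -H addr0.
have Treset : forall j, theta j r = 0 by move=> j; rewrite /theta rho_reset.
have prodrho : forall L : seq 'M[R[i]]_n,
    (forall M, M \in L -> exists u, M = rho delta R[i] u) ->
    exists w, \big[mulmx/1%:M]_(M <- L) M = rho delta R[i] w.
  elim=> [|M L IH] HL; first by exists [::]; rewrite big_nil rho_nil.
  have [w1 ->] := HL M (mem_head _ _).
  have [w2 Hw2] := IH (fun N HN => HL N (@mem_behead _ (M :: L) _ HN)).
  by exists (w1 ++ w2); rewrite big_cons Hw2 rho_cat.
have Tspan : forall j (M : 'M[R[i]]_(d j)), exists s : seq (R[i] * seq Sigma),
    M = \sum_(p <- s) p.1 *: theta j p.2.
  move=> j M.
  have [a [[s [Hs ->]] Ha]] := Hsurj (dfwith (fun i => 0) M).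
  rewrite -{1}(dfwith_in (fun i => 0 : 'M[R[i]]_(d i)) M) -Ha.
  clear Ha.
  elim: s Hs => [|p s IH] Hs.
    by exists [::]; rewrite !big_nil phi0.
  have [s' Hs'] := IH (fun q Hq => Hs q (@mem_behead _ (p :: s) _ Hq)).
  have [w Hw] := prodrho p.2 (Hs p (mem_head _ _)).
  exists ((p.1, w) :: s').
  have A1 : Alg (\big[mulmx/1%:M]_(M <- p.2) M) by rewrite Hw; apply: AlgRho.
  have A2 : Alg (\sum_(q <- s) q.1 *: \big[mulmx/1%:M]_(M <- q.2) M).
    exists s; split => //; by move=> q Hq; apply: Hs; rewrite inE Hq orbT.
  by rewrite !big_cons (Hlin _ _ _ _ A1 A2) Hw Hs'.
have Hu : theta l u != 0 by rewrite inE in Hl.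
split; last first.
  move=> x [l' [Hl' Hx]] j Hj.
  apply/eqP; apply: negbNE; apply/negP => nx.
  have Hju : theta j u != 0 by rewrite inE in Hj.
  have [y Hy] := span_nz (Tspan j) Hju nx.
  case: Hvmin => [[a [b Eu]] _ Hno].
  have Hz0 : supp theta (u ++ y ++ x) == set0.
    apply: negbNE; apply/negP => Hne; apply: Hno; exists (u ++ y ++ x); split => //.
      by exists a, (b ++ y ++ x); rewrite Eu -!catA.
    apply/properP; split.
      apply/subsetP => i; rewrite !inE; apply: contraNN => /eqP Hi.
      by rewrite Tcat Hi mul0mx.
    exists l' => //; by rewrite inE !Tcat Hx !mulmx0 eqxx.
  have : j \in supp theta (u ++ y ++ x) by rewrite inE !Tcat mulmxA.
  by rewrite (eqP Hz0) in_set0.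
move=> I HI.
have HI' := HI; case: HI' => [[_ Iw _] _ _].
have K := key_lemma delta (Tcat l) (Tnil l) (Tspan l) HI Hu.
split.
  move=> g Ig; case: (eqVneq g 0) => [->|ng].
    exists (u ++ r); split.
    - by exists [::], r.
    - by rewrite Tcat Treset mulmx0.
    - by left.
  have [y Ty] := Iw g Ig.
  have [w0 [H1 H2 _]] := K y (ltac:(by rewrite Ty)) (ltac:(by rewrite Ty)) g Ig.
  have [m [[w [Hw1 [Hw2 Hw3]]] Hmin]] :=
    @ex_min (fun m => exists w, in_two_sided u w /\ theta l w = g /\ rk delta w = m)
      (ex_intro _ (rk delta w0) (ex_intro _ w0 (conj H1 (conj H2 erefl)))).
  exists w; split => //; right => w' H1' H2'.
  by rewrite Hw3; apply: Hmin; exists w'.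
move=> g w Ig ng [Hin Hw [g0|Hmin]]; first by rewrite g0 eqxx in ng.
split.
  exists g; split => //; split; first by exists w.
  move=> r' [u' [Tu' <-]].
  have [w' [H1 H2 H3]] := K u' (ltac:(by rewrite Tu')) (ltac:(by rewrite Tu')) g Ig.
  exact: leq_trans (Hmin w' H1 H2) H3.
move=> r' [g' [Ig' ng' [[y [Ty <-]] _]]].
have [w' [H1 H2 H3]] := K y (ltac:(by rewrite Ty)) (ltac:(by rewrite Ty)) g Ig.
exact: leq_trans (Hmin w' H1 H2) H3.
Qed.
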